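(* Let $T$ be a tree with at least one edge, let $p(T)$ be the number of pendant vertices of $T$, and let $\widetilde{T}$ be the subtree obtained from $T$ by removing all pendant vertices of $T$. Then (i) $\alpha(T)<\alpha(\widetilde{T})+p(T)$; (ii) if $D\subseteq V_T$ satisfies $\alpha(T)=\alpha(T-D)+|D|$, then there is a pendant vertex $v$ of $T$ with $v\notin D$.
   Context: $\alpha(\cdot)$ denotes the independence number. A pendant vertex is a vertex of degree one. $T-D$ denotes the graph obtained from $T$ by deleting the vertices of $D$ and their incident edges. *)

(* Defs.v *)
(* A simple graph is a symmetric irreflexive relation e on a finType V. *)
From mathcomp Require Import all_boot.
Set Implicit Arguments. Unset Strict Implicit. Unset Printing Implicit Defensive.

Section Graphs.
Variables (V : finType) (e : rel V).

Definition connected_graph : Prop := forall x y : V, connect e x y.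

Definition has_cycle : Prop :=
  exists (x : V) (p : seq V), [/\ 2 <= size p, uniq (x :: p), path e x p & e (last x p) x].

Definition is_tree : Prop := connected_graph /\ ~ has_cycle.

Definition independent (I : {set V}) : bool :=
  [forall x in I, forall y in I, ~~ e x y].

(* independence number of the subgraph induced on S *)
Definition alpha_on (S : {set V}) : nat :=
  \max_(I : {set V} | independent I && (I \subset S)) #|I|.

Definition alpha : nat := alpha_on setT.

Definition degree (x : V) : nat := #|[set y | e x y]|.

Definition pendants : {set V} := [set x | degree x == 1].

End Graphs.

(* Main.v *)
Require Import Defs.
From mathcomp Require Import all_boot.
From mathcomp Require Import zify.
Set Implicit Arguments. Unset Strict Implicit. Unset Printing Implicit Defensive.

Section Proof.
Variables (V : finType) (e : rel V).
Hypotheses (e_sym : symmetric e) (e_irr : irreflexive e).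
Hypothesis noC : ~ has_cycle e.

Lemma indepP (I : {set V}) :
  reflect (forall x y, x \in I -> y \in I -> ~~ e x y) (independent e I).
Proof.
apply: (iffP forall_inP) => [H x y xI yI | H x xI].
  by have /forall_inP := H x xI; apply.
by apply/forall_inP => y yI; apply: H.
Qed.

Lemma indep_sub (I J : {set V}) : J \subset I -> independent e I -> independent e J.
Proof.
move=> /subsetP sJI /indepP H; apply/indepP => x y xJ yJ; apply: H; exact: sJI.
Qed.

Lemma alpha_ge (S I : {set V}) : independent e I -> I \subset S -> #|I| <= alpha_on e S.
Proof.
move=> iI sIS; rewrite /alpha_on.
by apply: (@leq_bigmax_cond _ (fun J => independent e J && (J \subset S)) (fun J => #|J|)); rewrite iI sIS.
Qed.

Lemma alpha_wit (S : {set V}) :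
  exists2 I : {set V}, independent e I && (I \subset S) & #|I| = alpha_on e S.
Proof.
have P0 : independent e set0 && (set0 \subset S).
  rewrite sub0set andbT; apply/indepP => x y; by rewrite inE.
rewrite /alpha_on (@bigmax_eq_arg _ set0 (fun J => independent e J && (J \subset S)) (fun J => #|J|) P0).
set I := [arg max_(i > set0 | _) _].
exists I => //.
rewrite /I; case: arg_maxnP => //.
Qed.

Lemma alpha_mono (S S' : {set V}) : alpha_on e S <= alpha_on e S' + #|S :\: S'|.
Proof.
have [I /andP[iI sIS] <-] := alpha_wit S.
rewrite -(cardsID S' I) leq_add //.
  by apply: alpha_ge; [apply: indep_sub iI; apply: subsetIl | apply: subsetIr].
by apply: subset_leq_card; apply: setSD.
Qed.

Lemma nb_sub (S S' : {set V}) v : (forall y, y \in S -> e v y -> y \in S') ->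
  #|[set y in S | e v y]| <= #|[set y in S' | e v y]|.
Proof.
move=> H; apply: subset_leq_card; apply/subsetP => y; rewrite !inE => /andP[yS evy].
by rewrite H.
Qed.

Lemma leaf_exists (S : {set V}) (s0 : V) : s0 \in S ->
  exists2 u, u \in S & #|[set y in S | e u y]| <= 1.
Proof.
move=> s0S.
case: (boolP [exists u in S, #|[set y in S | e u y]| <= 1]).
  by case/exists_inP => u uS H; exists u.
move/exists_inPn => Hdeg.
have ext : forall n, exists x p, [/\ x \in S, uniq (x :: p), path e x p & size p = n].
  elim=> [|n [x [p [xS up pp sp]]]]; first by exists s0, [::].
  set N := [set y in S | e x y].
  have N2 : 1 < #|N| by rewrite ltnNge Hdeg.
  case: (boolP [exists y in N, y \notin x :: p]).
    case/exists_inP => y; rewrite inE => /andP[yS exy] ynp.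
    exists y, (x :: p); split => //.
    - by rewrite (cons_uniq y (x :: p)) ynp up.
    - by rewrite /= e_sym exy pp.
    - by rewrite /= sp.
  move/exists_inPn => Hin.
  have : 0 < #|N :\ head x p|.
    have := cardsD1 (head x p) N; case: (head x p \in N) => /=; lia.
  case/card_gt0P => y; rewrite !inE => /and3P[yh yS exy].
  have := Hin y; rewrite !inE yS exy negbK => /(_ isT).
  case/orP=> [/eqP yx|yp].
    by move: exy; rewrite yx e_irr.
  exfalso; apply: noC.
  case/splitPr: yp up pp yh => p1 p2 up pp yh.
  have p1n : p1 != [::] by case: p1 up pp yh => //=; rewrite eqxx.
  have E : x :: p1 ++ y :: p2 = (x :: rcons p1 y) ++ p2 by rewrite /= -cats1 -catA.
  exists x, (rcons p1 y); split.
  - by rewrite size_rcons; case: p1 p1n {up pp yh E}.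
  - by move: up; rewrite E cat_uniq => /and3P[].
  - by move: pp; rewrite cat_path rcons_path /= => /andP[-> /andP[-> _]].
  - by rewrite last_rcons e_sym.
have [x [p [_ up _ sp]]] := ext #|V|.
have := max_card (mem (x :: p)); rewrite (card_uniqP up) /= sp => H.
by have := ltnn #|V|; rewrite H.
Qed.

Lemma lemD n : forall (S K : {set V}) s0, #|S| <= n -> s0 \in S -> K \subset S ->
  independent e K ->
  (forall v, v \in K -> 1 < #|[set y in S | e v y]|) ->
  exists J : {set V}, [/\ independent e J, J \subset S :\: K & #|K| < #|J|].
Proof.
elim: n => [|n IH] S K s0 cS s0S sKS iK degK.
  by move: cS; rewrite leqn0 => /eqP/cards0_eq SE; move: s0S; rewrite SE inE.
have [u uS du] := leaf_exists s0S.
set Nu := [set y in S | e u y] in du.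
have uK : u \notin K.
  by apply/negP => uK; have := degK u uK; rewrite -/Nu ltnNge du.
have cS' : #|S :\ u| <= n by move: cS; rewrite (cardsD1 u S) uS.
have sKS' : K \subset S :\ u.
  apply/subsetP => v vK; rewrite !inE (subsetP sKS) // andbT.
  by apply/eqP => vu; move: uK; rewrite -vu vK.
have easy : forall s1, s1 \in S :\ u -> (forall v, v \in K -> ~~ e v u) ->
    exists J : {set V}, [/\ independent e J, J \subset S :\: K & #|K| < #|J|].
  move=> s1 s1S' Hn.
  have degK' : forall v, v \in K -> 1 < #|[set y in S :\ u | e v y]|.
    move=> v vK; apply: leq_trans (degK v vK) _; apply: nb_sub => z zS evz.
    rewrite !inE zS andbT; apply/eqP => zu; move: (Hn v vK); by rewrite -zu evz.
  have [J [iJ sJ cJ]] := IH (S :\ u) K s1 cS' s1S' sKS' iK degK'.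
  exists J; split => //; apply: subset_trans sJ _; apply: setSD; exact: subsetDl.
move: du; rewrite leq_eqVlt ltnS leqn0; case/orP.
- case/cards1P => w Nuw.
  have: w \in Nu by rewrite Nuw set11.
  rewrite inE => /andP[wS euw].
  have wu : w != u by apply/eqP => wu; move: euw; rewrite wu e_irr.
  have Nu_w : forall z, z \in S -> e u z -> z = w.
    move=> z zS euz; have : z \in Nu by rewrite inE zS euz.
    by rewrite Nuw inE => /eqP.
  case: (boolP (w \in K)) => wK; last first.
    apply: (easy w); first by rewrite !inE wu wS.
    move=> v vK; apply/negP => evu.
    have vw : v = w by apply: Nu_w; [exact: (subsetP sKS v vK) | rewrite e_sym].
    by move: wK; rewrite -vw vK.
  set S' := S :\: [set u; w].
  set K' := K :\ w.
  have : 0 < #|[set y in S | e w y] :\ u|.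
    have := cardsD1 u [set y in S | e w y]; have := degK w wK.
    case: (u \in _) => /=; lia.
  case/card_gt0P => y; rewrite !inE => /and3P[yu yS ewy].
  have yS' : y \in S'.
    rewrite !inE negb_or yu yS andbT /=; apply/eqP => yw; move: ewy; by rewrite yw e_irr.
  have cS'' : #|S'| <= n.
    apply: leq_trans cS'; apply: subset_leq_card; apply/subsetP => z.
    by rewrite !inE negb_or => /andP[/andP[-> _] ->].
  have sK'S' : K' \subset S'.
    apply/subsetP => v; rewrite !inE negb_or => /andP[vw vK].
    rewrite vw (subsetP sKS) // andbT andbT.
    by apply/eqP => vu; move: uK; rewrite -vu vK.
  have iK' : independent e K' by apply: indep_sub iK; apply: subsetDl.
  have degK' : forall v, v \in K' -> 1 < #|[set y in S' | e v y]|.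
    move=> v; rewrite !inE => /andP[vw vK].
    apply: leq_trans (degK v vK) _; apply: nb_sub => z zS evz.
    rewrite !inE zS andbT negb_or; apply/andP; split.
      apply/eqP => zu; have : v = w by apply: Nu_w; [exact: (subsetP sKS v vK) | rewrite e_sym -zu].
      by move/eqP; rewrite (negbTE vw).
    apply/eqP => zw; move/indepP: iK => /(_ v w vK wK); by rewrite -zw evz.
  have [J' [iJ' sJ' cJ']] := IH S' K' y cS'' yS' sK'S' iK' degK'.
  have J'P : forall z, z \in J' -> [/\ z != u, z != w, z \in S & z \notin K].
    move=> z /(subsetP sJ'); rewrite !inE negb_or => /andP[nK /andP[/andP[zu zw] zS]].
    by rewrite zu zw zS; move: nK; rewrite zw.
  have uJ' : u \notin J' by apply/negP => /J'P[]; rewrite eqxx.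
  exists (u |: J'); split.
  + apply/indepP => a b; rewrite !inE.
    have Hu : forall z, z \in J' -> ~~ e u z.
      move=> z /J'P[_ zw zS _]; apply/negP => euz.
      by move: zw; rewrite (Nu_w z zS euz) eqxx.
    case/orP => [/eqP -> | aJ]; case/orP => [/eqP -> | bJ].
    * by rewrite e_irr.
    * exact: Hu.
    * by rewrite e_sym; apply: Hu.
    * by move/indepP: iJ' => /(_ a b aJ bJ).
  + apply/subsetP => z; rewrite !inE; case/orP => [/eqP -> | /J'P[_ _ -> ->] //].
    by rewrite uS andbT.
  + rewrite cardsU1 uJ' (cardsD1 w K) wK /=.
    by rewrite !add1n ltnS.
- move/eqP/cards0_eq => Nu0.
  case: (set_0Vmem (S :\ u)) => [S0 | [s1 s1S]]; last first.
    apply: (easy s1 s1S) => v vK; apply/negP => evu.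
    have : v \in Nu by rewrite inE (subsetP sKS v vK) e_sym.
    by rewrite Nu0 inE.
  exists [set u]; split.
  + by apply/indepP => a b; rewrite !inE => /eqP -> /eqP ->; rewrite e_irr.
  + by rewrite sub1set !inE uK.
  + have : K \subset set0 by rewrite -S0.
    by rewrite subset0 => /eqP ->; rewrite cards0 cards1.
Qed.

End Proof.

Theorem corollary1p17 (V : finType) (e : rel V)
  (e_sym : symmetric e) (e_irr : irreflexive e)
  (T_tree : is_tree e) (T_edge : exists x y : V, e x y) :
  (* (i): T~ = T minus its pendant vertices, induced on ~: pendants e *)
  alpha e < alpha_on e (~: pendants e) + #|pendants e|
  /\
  (* (ii): T - D is the subgraph induced on ~: D *)
  (forall D : {set V}, alpha e = alpha_on e (~: D) + #|D| ->
     exists v : V, v \in pendants e /\ v \notin D).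
Proof.
have [conn noC] := T_tree.
set P := pendants e.
have part1 : alpha e < alpha_on e (~: P) + #|P|.
  have [I /andP[iI _] cI] := alpha_wit e setT.
  rewrite /alpha -cI -(cardsID P I).
  case: (boolP (P \subset I)) => PI.
    have [x [y exy]] := T_edge.
    have [s0 s0P] : exists s0, s0 \in ~: P.
      case: (boolP (x \in P)) => xP; last by exists x; rewrite inE.
      case: (boolP (y \in P)) => yP; last by exists y; rewrite inE.
      by move/indepP: iI => /(_ x y (subsetP PI x xP) (subsetP PI y yP)); rewrite exy.
    have sK : I :\: P \subset ~: P by apply/subsetP => z; rewrite !inE => /andP[].
    have iK : independent e (I :\: P) by apply: indep_sub iI; apply: subsetDl.
    have degK : forall v, v \in I :\: P -> 1 < #|[set y in ~: P | e v y]|.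
      move=> v; rewrite inE => /andP[vP vI].
      have d1 : degree e v != 1 by move: vP; rewrite inE.
      have d0 : 0 < degree e v.
        have xy : x != y by apply/eqP => xy; move: exy; rewrite xy e_irr.
        pose w := if x == v then y else x.
        have wv : w != v.
          rewrite /w; case: (x =P v) => [<- | /eqP //]; by rewrite eq_sym.
        have /connectP [q pq lq] := conn v w.
        case: q pq lq => [/= _ wl | z q /= /andP[evz _] _]; first by move: wv; rewrite -wl eqxx.
        by apply/card_gt0P; exists z; rewrite inE.
      have d2 : 1 < degree e v by move: d1 d0; case: (degree e v) => [|[|]].
      apply: leq_trans d2 _; apply: subset_leq_card; apply/subsetP => z.
      rewrite !inE => evz; rewrite evz andbT; apply/negP => zP'.
      have zP : z \in P by rewrite inE.
      by move/indepP: iI => /(_ v z vI (subsetP PI z zP)); rewrite evz.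
    have [J [iJ sJ cJ]] := lemD e_sym e_irr noC (leqnn #|~: P|) s0P sK iK degK.
    have -> : I :&: P = P by apply/setIidPr.
    rewrite addnC ltn_add2r; apply: leq_trans cJ _; apply: alpha_ge => //.
    by apply: subset_trans sJ _; apply: subsetDl.
  have h1 : #|I :&: P| < #|P|.
    apply: proper_card; rewrite properE subsetIr /= subsetI subxx andbT //.
  have h2 : #|I :\: P| <= alpha_on e (~: P).
    apply: alpha_ge; first by apply: indep_sub iI; apply: subsetDl.
    by apply/subsetP => z; rewrite !inE => /andP[].
  lia.
split => // D hD.
case: (boolP [exists v in P, v \notin D]).
  by case/exists_inP => v vP vD; exists v.
move/exists_inPn => H.
have PD : P \subset D by apply/subsetP => v vP; have := H v vP; rewrite negbK.
have h := alpha_mono e (~: P) (~: D).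
have E1 : #|~: P :\: ~: D| = #|D :\: P|.
  by apply: eq_card => z; rewrite !inE negbK andbC.
have E2 : #|D| = #|P| + #|D :\: P|.
  by rewrite -(cardsID P D) (setIidPr PD).
move: part1 h; rewrite hD E1 E2 => p1 h.
lia.
Qed.
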